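(* Let $T$ be a $P$-Petri net, let $F\subseteq P$, let $\rho$ be a $(T,F)$-stabilized $P$-configuration, let $h$ be a positive integer with $h\geq\|T\|_\infty(1+\|T\|_\infty)^{|P|^{|P|}}$, and let $R=\{p\in P\mid\rho(p)<h\}$. Then every $P$-configuration $\alpha$ with $\alpha|_R\leq\rho|_R$ is $(T,F)$-stabilized.
   Context: A $P$-configuration is a map in $\mathbb{N}^P$; $\alpha\leq\beta$ means $\beta=\alpha+\rho$ for some configuration $\rho$ (componentwise order). For a finite set $R$, $\rho|_R$ is the $R$-configuration with $\rho|_R(q)=\rho(q)$ if $q\in P$ and $0$ otherwise. A $P$-Petri net $T$ is a finite set of pairs $t=(\alpha_t,\beta_t)$ of $P$-configurations; $\alpha\xrightarrow{t}\beta$ iff $\alpha=\alpha_t+\rho$, $\beta=\beta_t+\rho$ for some $\rho$; $\alpha\xrightarrow{T^*}\beta$ iff $\beta$ is reachable from $\alpha$ by a finite sequence of such steps with transitions in $T$. $\|T\|_\infty$ is the maximum entry of all $\alpha_t,\beta_t$ for $t\in T$. A $P$-configuration $\rho$ is $(T,F)$-stabilized if every $\beta$ with $\rho\xrightarrow{T^*}\beta$ satisfies $\beta(p)=0$ for all $p\in P\setminus F$. *)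

(* Defs.v *)
From mathcomp Require Import all_boot.
From Stdlib Require Import Relations.
Set Implicit Arguments. Unset Strict Implicit. Unset Printing Implicit Defensive.

Definition config (P : finType) := {ffun P -> nat}.

Definition cle (P : finType) (a b : config P) : Prop := forall p, a p <= b p.

Definition petri_net (P : finType) := seq (config P * config P).

Definition step (P : finType) (t : config P * config P) (a b : config P) : Prop :=
  exists rho : config P, (forall p, a p = t.1 p + rho p) /\ (forall p, b p = t.2 p + rho p).

Definition step_net (P : finType) (T : petri_net P) (a b : config P) : Prop :=
  exists2 t, t \in T & step t a b.

Definition reach (P : finType) (T : petri_net P) : relation (config P) :=
  clos_refl_trans (config P) (@step_net P T).

Definition norm_inf (P : finType) (T : petri_net P) : nat :=
  \max_(t <- T) \max_(p : P) maxn (t.1 p) (t.2 p).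

Definition stabilized (P : finType) (T : petri_net P) (F : {set P}) (rho : config P) : Prop :=
  forall beta, reach T rho beta -> forall p, p \notin F -> beta p = 0.

(* Main.v *)
Require Import Defs.
From mathcomp Require Import all_boot zify.
From Stdlib Require Import Relations.
Set Implicit Arguments. Unset Strict Implicit. Unset Printing Implicit Defensive.

Section Aux.
Variables (P : finType) (T : petri_net P) (F : {set P}).

Fixpoint chain (r : config P -> config P -> Prop) (a : config P) (s : seq (config P)) : Prop :=
  if s is b :: s' then r a b /\ chain r b s' else True.

Lemma chain_cat r a s1 s2 : chain r a (s1 ++ s2) <-> chain r a s1 /\ chain r (last a s1) s2.
Proof.
elim: s1 a => [|b s1 IH] a /=; first by tauto.
rewrite IH; tauto.
Qed.

Lemma chain_mono (r1 r2 : config P -> config P -> Prop) a s :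
  (forall x y, r1 x y -> r2 x y) -> chain r1 a s -> chain r2 a s.
Proof. move=> H; elim: s a => [|b s IH] a //= [/H ? /IH]; tauto. Qed.

Lemma reach_chain a b : reach T a b -> exists s, chain (@step_net P T) a s /\ last a s = b.
Proof.
elim=> {a b} [a b H|a|a b c _ [s1 [H1 E1]] _ [s2 [H2 E2]]].
- by exists [:: b].
- by exists [::].
- exists (s1 ++ s2); rewrite chain_cat last_cat E1; by split.
Qed.

Lemma chain_reach a s : chain (@step_net P T) a s -> reach T a (last a s).
Proof.
elim: s a => [|b s IH] a /=; first by move=> _; apply: rt_refl.
move=> [H1 H2]; apply: rt_trans (IH _ H2); exact: rt_step.
Qed.

Definition N := norm_inf T.

Lemma normP t q : t \in T -> t.1 q <= N /\ t.2 q <= N.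
Proof.
move=> tT.
have H1 : maxn (t.1 q) (t.2 q) <= \max_(p : P) maxn (t.1 p) (t.2 p)
  by apply: (@leq_bigmax P (fun p : P => maxn (t.1 p) (t.2 p)) q).
have H2 : \max_(p : P) maxn (t.1 p) (t.2 p) <= N.
  by rewrite /N /norm_inf; apply: (@leq_bigmax_seq _ T xpredT (fun t => \max_(p : P) maxn (t.1 p) (t.2 p)) t tT erefl).
rewrite geq_max in H1; lia.
Qed.

Lemma stab_reach rho e : stabilized T F rho -> reach T rho e -> stabilized T F e.
Proof. move=> S R b Rb; apply: S; exact: rt_trans R Rb. Qed.

Variable R : {set P}.
Definition pi (c : config P) : config P := [ffun q => if q \in R then c q else 0].
Definition stepR a b := exists2 a0, pi a0 = pi a & step_net T a0 b.

Lemma piR c q : q \in R -> pi c q = c q.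
Proof. by move=> qR; rewrite ffunE qR. Qed.

Lemma chainR_pi a a' s : pi a = pi a' -> chain stepR a s -> chain stepR a' s.
Proof.
case: s => [|b s] //= E [[a0 E0 St] H]; split=> //; exists a0 => //; by rewrite E0.
Qed.

Lemma loopfree s a : chain stepR a s -> exists s', [/\ chain stepR a s',
  pi (last a s') = pi (last a s), {subset s' <= s} & uniq (map pi (a :: s'))].
Proof.
elim: s a => [|d s IH] a /=.
  by move=> _; exists [::].
move=> [Sad Hd]; have [s1 [C1 L1 S1 U1]] := IH _ Hd.
have Cad : chain stepR a (d :: s1) by [].
case: (boolP (pi a \in map pi (d :: s1))) => Hin; last first.
  exists (d :: s1); split => //.
  - by move=> y; rewrite !inE => /orP [->//|/S1 ->]; rewrite orbT.
  - by rewrite map_cons cons_uniq Hin.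
case/mapP: Hin => x xin Ex.
have [l1 [l2 E]] : exists l1 l2, d :: s1 = l1 ++ x :: l2.
  by case/splitPr: xin => l1 l2; exists l1, l2.
move: Cad U1; rewrite E.
move=> /chain_cat [_ /=] [] _ Cx.
rewrite map_cat cat_uniq => /and3P [_ _ U2].
have Cx' : chain stepR a l2 by apply: chainR_pi Cx.
have E1 : last d s1 = last x l2 by rewrite -[last d s1]/(last a (d :: s1)) E last_cat.
exists l2; split => //.
- rewrite -L1 E1; case: {E Cx' Cx U2 E1} l2 => [|y l2] //=.
- move=> y yl2; have : y \in d :: s1 by rewrite E mem_cat inE yl2 !orbT.
  by rewrite !inE => /orP [->//|/S1 ->]; rewrite orbT.
- by move: U2; rewrite /= Ex.
Qed.

Definition Q B (x : config P) := [exists q in R, B <= x q].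

Lemma count_uniq B' (l : seq (config P)) :
  all (predC (Q B'.+1)) l -> uniq (map pi l) -> size l <= B'.+1 ^ #|R|.
Proof.
move=> Al Ul.
pose g := fun x : config P => [ffun q : {q : P | q \in R} => (inord (x (val q)) : 'I_B'.+1)].
have inj : {in map pi l &, injective g}.
  move=> y1 y2 /mapP [x1 x1l ->] /mapP [x2 x2l ->] E.
  have lo : forall x q, x \in l -> q \in R -> x q < B'.+1.
    move=> x q xl qR; move/allP: Al => /(_ x xl) /= /existsPn /(_ q).
    by rewrite qR /= -ltnNge.
  apply/ffunP => q; rewrite !ffunE; case: (boolP (q \in R)) => qR //.
  move/ffunP: E => /(_ (exist _ q qR)); rewrite /g !ffunE /= qR.
  by move=> /(congr1 val) /=; rewrite !inordK //; apply: lo.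
have U : uniq (map g (map pi l)) by rewrite map_inj_in_uniq.
have := max_card (mem (map g (map pi l))).
rewrite (card_uniqP U) !size_map card_ffun card_ord card_sig.
suff -> : #|[pred x | x \in R]| = #|R| by [].
by apply: eq_card.
Qed.

Lemma simulate s (a d : config P) K : chain stepR a s -> (forall q, q \in R -> a q <= d q) ->
  (forall q, q \notin R -> N * size s + K <= d q) ->
  exists e, [/\ reach T d e, (forall q, q \in R -> last a s q <= e q) &
    (forall q, q \notin R -> K <= e q)].
Proof.
elim: s a d => [|b s IH] a d /=.
  move=> _ H1 H2; exists d; split => //; first exact: rt_refl.
  by move=> q /H2; rewrite muln0.
move=> [[a0 E0 [t tT [r [Ea Eb]]]] C] H1 H2.
have le1 : forall q, t.1 q <= d q.
  move=> q; case: (boolP (q \in R)) => qR.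
    have := H1 q qR; rewrite -(piR a qR) -E0 (piR a0 qR) Ea; exact: leq_trans (leq_addr _ _).
  have := H2 q qR; have [? ?] := normP q tT; rewrite mulnS; lia.
pose d' : config P := [ffun q => d q - t.1 q + t.2 q].
have Sd : step_net T d d'.
  exists t => //; exists [ffun q => d q - t.1 q]; split => q; rewrite !ffunE; [by rewrite subnKC // le1 | by rewrite addnC].
have Hb1 : forall q, q \in R -> b q <= d' q.
  move=> q qR; rewrite ffunE Eb; have := H1 q qR; have := le1 q.
  rewrite -(piR a qR) -E0 (piR a0 qR) Ea; move=> le H; by rewrite [X in _ <= X]addnC leq_add2l leq_subRL.
have Hb2 : forall q, q \notin R -> N * size s + K <= d' q.
  move=> q qR; rewrite ffunE; have := H2 q qR; have [? ?] := normP q tT.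
  rewrite mulnS; lia.
have [e [Re L1 L2]] := IH b d' C Hb1 Hb2.
exists e; split => //; exact: rt_trans (rt_step _ _ _ _ Sd) Re.
Qed.

Lemma shorten B' s a : chain (@step_net P T) a s -> all (predC (Q B'.+1)) (a :: s) ->
  exists s', [/\ chain stepR a s', pi (last a s') = pi (last a s) & size s' < B'.+1 ^ #|R|].
Proof.
move=> C Al.
have CR : chain stepR a s by apply: chain_mono C => x y H; exists x.
have [s' [C' L' S' U']] := loopfree CR.
exists s'; split => //.
have Al' : all (predC (Q B'.+1)) (a :: s').
  move: Al => /= /andP [-> /allP Al] /=; apply/allP => y /S' ys; exact: Al.
by have := count_uniq Al' U'.
Qed.
End Aux.

Lemma split_has (A : eqType) (Qp : pred A) (s : seq A) : has Qp s ->
  exists s1 x s2, [/\ s = s1 ++ x :: s2, all (predC Qp) s1 & Qp x].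
Proof.
elim: s => [|y s IH] //= /orP [Hy|Hs].
  by exists [::], y, s.
case: (boolP (Qp y)) => Hy; first by exists [::], y, s.
have [s1 [x [s2 [-> A1 Qx]]]] := IH Hs.
by exists (y :: s1), x, s2; split => //=; rewrite Hy.
Qed.

Fixpoint G (N m : nat) : nat := if m is m'.+1 then G N m' + N * (G N m') ^ m'.+1 else 1.

Lemma G_pos N m : 0 < G N m.
Proof. elim: m => //= m IH; exact: leq_trans IH (leq_addr _ _). Qed.

Section Main.
Variables (P : finType) (T : petri_net P) (F : {set P}).

Lemma main m : forall (rho alpha : config P) h, stabilized T F rho -> G (N T) m <= h ->
  #|[set q | rho q < h]| <= m ->
  (forall p, p \in [set q | rho q < h] -> alpha p <= rho p) -> stabilized T F alpha.
Proof.
elim: m => [|m IH] rho alpha h Srho Gh Rc Hle beta Rab p pF;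
  case: (posnP (beta p)) => // bp; exfalso;
  set R := [set q | rho q < h] in Rc Hle;
  have rp0 : rho p = 0 := Srho rho (rt_refl _ _ _) p pF;
  have pR : p \in R by rewrite inE rp0; exact: leq_trans (G_pos _ _) Gh.
  have H0 : 0 < #|R| by apply/card_gt0P; exists p.
  by move: Rc; rewrite leqNgt H0.
set B := G (N T) m.
have [B' EB] : exists B', B = B'.+1 by move: (G_pos (N T) m); rewrite -/B; case: (B) => // B' _; exists B'.
have Bpow : B'.+1 ^ #|R| <= B ^ m.+1 by rewrite EB leq_pexp2l.
have GmS : G (N T) m.+1 = B + N T * B ^ m.+1 by [].
have offR : forall q, q \notin R -> h <= rho q by move=> q; rewrite inE -leqNgt.
have [s [Cs Ls]] := reach_chain Rab.
case: (boolP (has (Q R B) (alpha :: s))) => HQ; last first.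
  have Al : all (predC (Q R B'.+1)) (alpha :: s) by rewrite all_predC -EB.
  have [s' [C' L' Sz]] := shorten Cs Al.
  have H2 : forall q, q \notin R -> N T * size s' + 0 <= rho q.
    move=> q qR; have := offR q qR; have := leq_mul (leqnn (N T)) (ltnW (leq_trans Sz Bpow)).
    move: Gh; rewrite GmS; lia.
  have [e [Re E1 E2]] := simulate C' Hle H2.
  have := E1 p pR; rewrite -(piR (last alpha s') pR) L' Ls (piR _ pR).
  by rewrite (Srho e Re p pF) leqn0 => /eqP E; rewrite E in bp.
have [s'' [x [C'' Lx Sz Qx Rxb]]] : exists s'' x, [/\ chain (stepR T R) alpha s'',
   last alpha s'' = x, size s'' <= B ^ m.+1, Q R B x & reach T x beta].
  case: (boolP (Q R B alpha)) => Qa.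
    by exists [::], alpha; split => //; rewrite -Ls; apply: chain_reach.
  have Hs : has (Q R B) s by move: HQ; rewrite /= (negbTE Qa).
  have [s1 [x [s2 [Es A1 Qx]]]] := split_has Hs.
  move: Cs; rewrite Es => /chain_cat [C1 /= [Sx C2]].
  have Al : all (predC (Q R B'.+1)) (alpha :: s1).
    by rewrite /= -EB A1 andbT.
  have [s' [C' L' Sz]] := shorten C1 Al.
  exists (rcons s' x), x; split.
  - rewrite -cats1; apply/chain_cat; split => //=; split => //.
    by exists (last alpha s1).
  - by rewrite last_rcons.
  - by rewrite size_rcons; exact: leq_trans Sz Bpow.
  - done.
  - by rewrite -Ls Es last_cat /=; apply: chain_reach.
have H2 : forall q, q \notin R -> N T * size s'' + B <= rho q.
  move=> q qR; have := offR q qR; have := leq_mul (leqnn (N T)) Sz.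
  move: Gh; rewrite GmS; lia.
have [e [Re E1 E2]] := simulate C'' Hle H2.
have Se := stab_reach Srho Re.
suff Sx : stabilized T F x by move: (Sx beta Rxb p pF) bp => ->.
apply: (IH e x B Se (leqnn _)).
- case/existsP: Qx => q0 /andP [q0R Bq0].
  have sub : [set q | e q < B] \subset R :\ q0.
    apply/subsetP => q; rewrite !inE => eB; apply/andP; split.
      by apply: contraTneq eB => ->; rewrite -leqNgt; apply: leq_trans Bq0 _; rewrite -Lx; apply: E1.
    by apply: contraTT eB => H; rewrite -leqNgt; apply: E2; rewrite inE.
  have := subset_leq_card sub; have := cardsD1 q0 R; rewrite q0R; lia.
- move=> q; rewrite inE => eB; have qR : q \in R by apply: contraLR eB; rewrite -leqNgt ; exact: E2.
  by rewrite -Lx; apply: E1.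
Qed.
End Main.

Fixpoint ex (m : nat) : nat := if m is m'.+1 then m'.+1 * ex m' + 1 else 0.

Lemma G_ex N m : G N m <= (1 + N) ^ ex m.
Proof.
elim: m => //= m IH.
have h1 : (1 + N) ^ ex m <= (1 + N) ^ (m.+1 * ex m) by rewrite leq_pexp2l // leq_pmull.
have h2 : G N m ^ m.+1 <= ((1 + N) ^ ex m) ^ m.+1 by rewrite leq_exp2r.
rewrite -expnM mulnC in h2.
rewrite expnD expn1 [in X in _ <= X]mulnC mulnDl mul1n.
apply: leq_add; first exact: leq_trans IH h1.
by rewrite leq_mul2l h2 orbT.
Qed.

Lemma ex_le m : ex m <= m ^ m.
Proof.
case: m => // m; elim: m => // m IH.
have H : (m.+1) ^ m.+1 < (m.+2) ^ m.+1 by rewrite ltn_exp2r.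
rewrite [ex _]/= [m.+2 ^ m.+2]expnS.
have := leq_mul (leqnn m.+2) H. rewrite mulnS.
have := leq_mul (leqnn m.+2) IH. rewrite -[m.+1 * ex m + 1]/(ex m.+1). lia.
Qed.

Lemma pow_self_mono m d : m <= d -> m ^ m <= d ^ d.
Proof.
case: m => [|m] H; first by rewrite expn0 expn_gt0; case: d H.
apply: leq_trans (_ : d ^ m.+1 <= d ^ d).
  by rewrite leq_exp2r.
by rewrite leq_pexp2l //; apply: leq_trans H.
Qed.

Lemma G_bound N m d : m <= d -> G N m <= maxn 1 (N * (1 + N) ^ (d ^ d)).
Proof.
move=> md; case: N => [|N].
  suff -> : G 0 m = 1 by apply: leq_maxl.
  by elim: m {md} => //= m ->; rewrite mul0n.
apply: leq_trans (leq_maxr _ _).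
apply: leq_trans (G_ex _ _) _.
apply: leq_trans (_ : (1 + N.+1) ^ (d ^ d) <= _); last by rewrite leq_pmull.
rewrite leq_pexp2l //; apply: leq_trans (ex_le m) _; exact: pow_self_mono.
Qed.

Theorem lemma5p4 (P : finType) (T : petri_net P) (F : {set P}) (rho : config P) (h : nat) :
  stabilized T F rho ->
  0 < h ->
  norm_inf T * (1 + norm_inf T) ^ (#|P| ^ #|P|) <= h ->
  forall alpha : config P,
    (forall p, p \in [set q | rho q < h] -> alpha p <= rho p) ->
    stabilized T F alpha.
Proof.
move=> S h0 hN alpha Hle.
apply: (main (m := #|[set q | rho q < h]|) S _ (leqnn _) Hle).
apply: leq_trans (G_bound _ (max_card _)) _.
by rewrite geq_max h0.
Qed.
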